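(* Let $k$ be an algebraically closed field of characteristic $p>0$, and let $f:\mathbb A^n_k\to\mathbb A^n_k$ be a homomorphism of algebraic groups $\mathbb G_a^n\to\mathbb G_a^n$, given by additive polynomials \[ f_j(x_1,\dots,x_n)=\sum_{i=1}^n\sum_{\ell=0}^{N_j}a_{j,i,\ell}\,x_i^{p^\ell},\qquad 1\le j\le n. \] Assume $f$ is finite and bijective on $k$-points (equivalently, $f$ is a finite radicial isogeny of $\mathbb G_a^n$). Then for every $k$-linear subspace $W\subset\mathbb A^n_k$, the reduced inverse image satisfies $f^{-1}(W)_{\mathrm{red}}\cong\mathbb A^{\dim W}_k$ as $k$-varieties. *)

(* Defs.v *)
From HB Require Import structures.
From mathcomp Require Import all_boot all_order all_algebra all_field.
From mathcomp Require Import mpoly.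
Set Implicit Arguments. Unset Strict Implicit. Unset Printing Implicit Defensive.
Import GRing.Theory.
Local Open Scope ring_scope.

Section AddPoly.
Variables (k : fieldType) (n : nat).

Definition addpoly (p : nat) (N : 'I_n -> nat) (a : 'I_n -> 'I_n -> nat -> k)
  (j : 'I_n) : {mpoly k[n]} :=
  \sum_(i < n) \sum_(l < (N j).+1) a j i l *: ('X_i ^+ (p ^ l)).

Definition polymap (m : nat) (P : 'I_m -> {mpoly k[n]}) (x : 'rV[k]_n) : 'rV[k]_m :=
  \row_(j < m) (P j).@[fun i => x 0 i].

(* The morphism A^n -> A^n given by f = (f_1,..,f_n) is finite:
   k[x_1..x_n] is a finitely generated module over k[f_1..f_n]
   (the image of the comorphism q |-> q(f_1,..,f_n)). *)
Definition finite_polymap (f : 'I_n -> {mpoly k[n]}) : Prop :=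
  exists (m : nat) (g : 'I_m -> {mpoly k[n]}),
    forall q : {mpoly k[n]}, exists c : 'I_m -> {mpoly k[n]},
      q = \sum_(l < m) comp_mpoly [tuple f i | i < n] (c l) * g l.

End AddPoly.

(* Main.v *)
Require Import Defs.
From HB Require Import structures.
From mathcomp Require Import all_boot all_order all_algebra all_field.
From mathcomp Require Import mpoly.
From mathcomp Require Import zify ring.
From mathcomp Require Import all_fingroup.
Import GRing.Theory.
Local Open Scope ring_scope.
Set Implicit Arguments. Unset Strict Implicit. Unset Printing Implicit Defensive.



Section AP.
Variables (k : closedFieldType) (p : nat).
Hypothesis hp : p \in [pchar k].

Lemma p_prime : prime p. Proof. exact: (pcharf_prime hp). Qed.
Lemma p_gt1 : (1 < p)%N. Proof. exact: prime_gt1 p_prime. Qed.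
Lemma pexp_gt0 l : (0 < p ^ l)%N. Proof. by rewrite expn_gt0 (ltnW p_gt1). Qed.

Definition ap (b : {poly k}) (x : k) : k := \sum_(l < size b) b`_l * x ^+ (p ^ l).

Lemma ap_sz (b : {poly k}) x m : (size b <= m)%N -> ap b x = \sum_(l < m) b`_l * x ^+ (p ^ l).
Proof.
move=> hm; rewrite /ap (big_ord_widen m (fun l => b`_l * x ^+ (p ^ l))) //.
rewrite big_mkcond; apply: eq_bigr => l _; case: ifP => // /negbT.
by rewrite -leqNgt => hl; rewrite nth_default // mul0r.
Qed.

Lemma ap0 (x : k) : ap 0 x = 0.
Proof. by rewrite /ap size_poly0 big_ord0. Qed.

Lemma apD (b c : {poly k}) x : ap (b + c) x = ap b x + ap c x.
Proof.
rewrite (@ap_sz _ _ (maxn (size b) (size c))) ?size_polyD //.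
rewrite (@ap_sz b _ (maxn (size b) (size c))) ?leq_maxl //.
rewrite (@ap_sz c _ (maxn (size b) (size c))) ?leq_maxr //.
by rewrite -big_split; apply: eq_bigr => l _; rewrite coefD mulrDl.
Qed.

Lemma apZ c (b : {poly k}) x : ap (c *: b) x = c * ap b x.
Proof.
rewrite (@ap_sz _ _ (size b)) ?size_scale_leq // /ap mulr_sumr.
by apply: eq_bigr => l _; rewrite coefZ mulrA.
Qed.

Lemma apN (b : {poly k}) x : ap (- b) x = - ap b x.
Proof. by rewrite -scaleN1r apZ mulN1r. Qed.

Lemma apB (b c : {poly k}) x : ap (b - c) x = ap b x - ap c x.
Proof. by rewrite apD apN. Qed.

Lemma ap_sum I (r : seq I) (P : pred I) (F : I -> {poly k}) x :
  ap (\sum_(i <- r | P i) F i) x = \sum_(i <- r | P i) ap (F i) x.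
Proof.
by elim/big_rec2: _ => [|i y b _ <-]; rewrite ?ap0 ?apD.
Qed.

Lemma ap_x0 (b : {poly k}) : ap b 0 = 0.
Proof.
by rewrite /ap big1 // => l _; rewrite expr0n eqn0Ngt pexp_gt0 mulr0.
Qed.

Lemma pnat_pexp l : [pchar k].-nat (p ^ l)%N.
Proof. by rewrite pnatX pnatE ?p_prime ?hp. Qed.

Lemma ap_add (b : {poly k}) x y : ap b (x + y) = ap b x + ap b y.
Proof.
rewrite /ap -big_split; apply: eq_bigr => l _.
by rewrite exprDn_pchar ?pnat_pexp // mulrDr.
Qed.

Lemma ap_opp (b : {poly k}) x : ap b (- x) = - ap b x.
Proof.
apply/eqP; rewrite -subr_eq0 opprK -ap_add addNr ap_x0 //.
Qed.

Definition comp_mono (b : {poly k}) (c : k) (t : nat) : {poly k} :=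
  \poly_(i < size b + t) (if (t <= i)%N then b`_(i - t) * c ^+ (p ^ (i - t)) else 0).

Lemma comp_mono0 c t : comp_mono 0 c t = 0.
Proof.
apply/polyP => i; rewrite coef_poly !coef0 mul0r !if_same //.
Qed.

Lemma ap_comp (b : {poly k}) c t x : ap (comp_mono b c t) x = ap b (c * x ^+ (p ^ t)).
Proof.
rewrite (@ap_sz _ _ (t + size b)); last by rewrite addnC size_poly.
rewrite big_split_ord /= big1 ?add0r; last first.
  by move=> i _; rewrite coef_poly /= (leqNgt t i) (ltn_ord i) /= !if_same mul0r.
apply: eq_bigr => i _; rewrite coef_poly /= [(size b + t)%N]addnC ltn_add2l (ltn_ord i) leq_addr.
rewrite addKn exprMn -mulrA; congr (_ * (_ * _)).
by rewrite -exprM -expnD addnC.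
Qed.

Lemma reduce_step (bi bj : {poly k}) : bi != 0 -> (size bi <= size bj)%N ->
  exists c t, (size (bj - comp_mono bi c t)%R < size bj)%N.
Proof.
move=> bi0 hs.
have si : (0 < size bi)%N by rewrite size_poly_gt0.
set Di := (size bi).-1; set Dj := (size bj).-1.
have [c hc] := @solve_monicpoly k (p ^ Di)%N (fun i => if i == 0%N then lead_coef bj / lead_coef bi else 0) (pexp_gt0 Di).
have {}hc : c ^+ (p ^ Di) = lead_coef bj / lead_coef bi.
  move: hc (pexp_gt0 Di); case: (p ^ Di)%N => // m -> _.
  by rewrite big_ord_recl /= expr0 mulr1 big1 ?addr0 // => i _; rewrite mul0r.
exists c, (Dj - Di)%N.
have Ej : size bj = Dj.+1 by rewrite /Dj prednK // (leq_trans si hs).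
rewrite Ej ltnS; apply/leq_sizeP => l hl.
rewrite coefB coef_poly.
have Ei : size bi = Di.+1 by rewrite /Di prednK.
have hDij : (Di <= Dj)%N by move: hs; rewrite Ei Ej.
case: (ltngtP l Dj) => hl2.
- by move: hl hl2; lia.
- rewrite nth_default ?Ej //.
  case: ifP => h1; last by rewrite subr0.
  by move: h1 hl2; rewrite Ei; lia.
- subst l. rewrite Ei ifT; last by lia.
  rewrite ifT; last by lia.
  have -> : (Dj - (Dj - Di) = Di)%N by lia.
  rewrite hc.
  have -> : bi`_Di = lead_coef bi by rewrite lead_coefE.
  have -> : bj`_Dj = lead_coef bj by rewrite lead_coefE.
  rewrite mulrC divfK ?subrr // lead_coef_eq0 //.
Qed.

Lemma ap_surj (b : {poly k}) : b != 0 -> forall z, exists x, ap b x = z.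
Proof.
move=> b0 z.
pose Q : {poly k} := \sum_(l < size b) b`_l *: 'X^(p ^ l) - z%:P.
have hQ : forall x, Q.[x] = ap b x - z.
  move=> x; rewrite /Q hornerD hornerN hornerC horner_sum; congr (_ - _).
  by apply: eq_bigr => l _; rewrite hornerZ hornerXn.
set D := (size b).-1.
have Eb : size b = D.+1 by rewrite /D prednK // size_poly_gt0.
have cQ : Q`_(p ^ D) = lead_coef b.
  rewrite /Q coefB coefC eqn0Ngt pexp_gt0 subr0 coef_sum.
  rewrite Eb (bigD1 ord_max) //= coefZ coefXn eqxx mulr1 big1 ?addr0.
    by rewrite lead_coefE Eb.
  move=> i hi; rewrite coefZ coefXn eqn_exp2l ?p_gt1 //.
  by rewrite (negbTE (_ : D != i)) ?mulr0 // eq_sym; apply: contra hi => /eqP h; apply/eqP/val_inj.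
have : size Q != 1%N.
  have : Q`_(p ^ D) != 0 by rewrite cQ lead_coef_eq0.
  move=> h; apply/eqP => h1.
  move: h; rewrite nth_default ?eqxx // h1 (pexp_gt0 D) //.
move/closed_rootP => [x /rootP hx]; exists x; apply/eqP; rewrite -subr_eq0 -hQ hx //.
Qed.

End AP.



Section Mx.
Variables (k : closedFieldType) (p : nat).
Hypothesis hp : p \in [pchar k].
Variable n : nat.

Definition Mx := 'I_n -> 'I_n -> {poly k}.

Definition act (L : Mx) (y : 'rV[k]_n) : 'rV[k]_n :=
  \row_(r < n) \sum_(l < n) ap p (L r l) (y 0 l).

Definition colop (L : Mx) (i j : 'I_n) (c : k) (t : nat) : Mx :=
  fun r l => if l == j then L r j - comp_mono p (L r i) c t else L r l.

Definition Eop (i j : 'I_n) (c : k) (t : nat) (y : 'rV[k]_n) : 'rV[k]_n :=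
  \row_(l < n) if l == i then y 0 i + c * (y 0 j) ^+ (p ^ t) else y 0 l.

Lemma act_colop L i j c t y : i != j ->
  act L y = act (colop L i j c t) (Eop i j c t y).
Proof.
move=> hij; apply/rowP => r; rewrite !mxE.
have hji : j != i by rewrite eq_sym.
rewrite (bigD1 i) // (bigD1 j) ?hji //=.
rewrite [in RHS](bigD1 i) // [in RHS](bigD1 j) ?hji //=.
rewrite /colop !mxE eqxx (negbTE hij) eqxx (negbTE hji).
rewrite ap_add // apB ap_comp.
rewrite [X in _ = _ + (_ + X)](eq_bigr (fun l => ap p (L r l) (y 0 l))); last first.
  by move=> l /andP [hli hlj]; rewrite mxE (negbTE hli) (negbTE hlj).
ring.
Qed.

Lemma Eop_K i j c t : i != j -> cancel (Eop i j c t) (Eop i j (- c) t).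
Proof.
move=> hij y; apply/rowP => l; rewrite !mxE.
case: eqP => [->|//]; rewrite eqxx eq_sym (negbTE hij).
by rewrite mulNr addrK.
Qed.

Definition colsw (L : Mx) (i j : 'I_n) : Mx := fun r l => L r (tperm i j l).
Definition Esw (i j : 'I_n) (y : 'rV[k]_n) : 'rV[k]_n := \row_(l < n) y 0 (tperm i j l).

Lemma act_colsw L i j y : act L y = act (colsw L i j) (Esw i j y).
Proof.
apply/rowP => r; rewrite !mxE (reindex_inj (@perm_inj _ (tperm i j))) /=.
by apply: eq_bigr => l _; rewrite /colsw mxE.
Qed.

Lemma Esw_K i j : cancel (Esw i j) (Esw i j).
Proof. by move=> y; apply/rowP => l; rewrite !mxE tpermK. Qed.

Definition ispoly m m' (F : 'rV[k]_m -> 'rV[k]_m') :=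
  exists P : 'I_m' -> {mpoly k[m]}, forall x, polymap P x = F x.

Lemma ispoly_comp m1 m2 m3 (F : 'rV[k]_m1 -> 'rV[k]_m2) (G : 'rV[k]_m2 -> 'rV[k]_m3) :
  ispoly F -> ispoly G -> ispoly (G \o F).
Proof.
move=> [P hP] [Q hQ]; exists (fun i => comp_mpoly [tuple P j | j < m2] (Q i)) => x.
rewrite /= -hP -hQ; apply/rowP => i; rewrite !mxE comp_mpoly_meval.
by apply: meval_eq => j; rewrite tnth_mktuple mxE.
Qed.

Lemma ispoly_id m : ispoly (@id 'rV[k]_m).
Proof. by exists (fun i => 'X_i) => x; apply/rowP => i; rewrite !mxE mevalXU. Qed.

Lemma ispoly_Eop i j c t : ispoly (Eop i j c t).
Proof.
exists (fun l => if l == i then 'X_i + c *: 'X_j ^+ (p ^ t) else 'X_l) => x.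
apply/rowP => l; rewrite !mxE; case: eqP => _.
  by rewrite mevalD mevalZ rmorphXn /= !mevalXU.
by rewrite mevalXU.
Qed.

Lemma ispoly_Esw i j : ispoly (Esw i j).
Proof. by exists (fun l => 'X_(tperm i j l)) => x; apply/rowP => l; rewrite !mxE mevalXU. Qed.

Definition equiv (L L' : Mx) := exists E Einv : 'rV[k]_n -> 'rV[k]_n,
  [/\ ispoly E, ispoly Einv, cancel E Einv, cancel Einv E & forall y, act L y = act L' (E y)].

Lemma equiv_refl L : equiv L L.
Proof. by exists id, id; split => //; apply: ispoly_id. Qed.

Lemma equiv_trans L1 L2 L3 : equiv L1 L2 -> equiv L2 L3 -> equiv L1 L3.
Proof.
move=> [E [Ei [h1 h2 h3 h4 h5]]] [F [Fi [g1 g2 g3 g4 g5]]].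
exists (F \o E), (Ei \o Fi); split.
- exact: ispoly_comp.
- exact: ispoly_comp.
- by move=> y /=; rewrite g3 h3.
- by move=> y /=; rewrite h4 g4.
- by move=> y /=; rewrite h5 g5.
Qed.

Lemma equiv_colop L i j c t : i != j -> equiv L (colop L i j c t).
Proof.
move=> hij; exists (Eop i j c t), (Eop i j (- c) t); split.
- exact: ispoly_Eop.
- exact: ispoly_Eop.
- exact: Eop_K.
- by move=> y; have := Eop_K (- c) t hij y; rewrite opprK.
- by move=> y; apply: act_colop.
Qed.

Lemma equiv_colsw L i j : equiv L (colsw L i j).
Proof.
exists (Esw i j), (Esw i j); split; try exact: ispoly_Esw; try exact: Esw_K.
by move=> y; apply: act_colsw.
Qed.

End Mx.



Section Tri.
Variables (k : closedFieldType) (p : nat).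
Hypothesis hp : p \in [pchar k].
Variable n : nat.

Lemma two_col (L : Mx k n) (s i j : 'I_n) : i != j -> exists L',
  [/\ equiv p L L', L' s j = 0,
      forall r l, l != i -> l != j -> L' r l = L r l
    & forall r, L r i = 0 -> L r j = 0 -> L' r i = 0 /\ L' r j = 0].
Proof.
move=> hij; have hji : j != i by rewrite eq_sym.
move: {2}(size (L s i) + size (L s j))%N (leqnn (size (L s i) + size (L s j))%N) => m.
elim: m L => [|m IH] L hm.
  exists L; split => //; first exact: equiv_refl.
  by apply/eqP; rewrite -size_poly_eq0; move: hm; lia.
have [Lj0|Lj0] := eqVneq (L s j) 0.
  by exists L; split => //; exact: equiv_refl.
have [Li0|Li0] := eqVneq (L s i) 0.
  exists (colsw L i j); split.
  - exact: equiv_colsw.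
  - by rewrite /colsw tpermR.
  - by move=> r l hli hlj; rewrite /colsw tpermD // eq_sym.
  - by move=> r h1 h2; rewrite /colsw tpermL tpermR.
have [hs|hs] := leqP (size (L s i)) (size (L s j)).
  have [c [t hct]] := reduce_step hp Li0 hs.
  have hm' : (size (colop p L i j c t s i) + size (colop p L i j c t s j) <= m)%N.
    by move: hm; rewrite /colop eqxx (negbTE hij); lia.
  have [L' [e1 e2 e3 e4]] := IH (colop p L i j c t) hm'.
  exists L'; split.
  - exact: equiv_trans (equiv_colop hp L c t hij) e1.
  - exact: e2.
  - by move=> r l h1 h2; rewrite e3 // /colop (negbTE h2).
  - move=> r h1 h2; apply: e4; rewrite /colop ?eqxx ?(negbTE hij) //.
    by rewrite h2 h1 comp_mono0 subr0.
have [c [t hct]] := reduce_step hp Lj0 (ltnW hs).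
have hm' : (size (colop p L j i c t s i) + size (colop p L j i c t s j) <= m)%N.
  by move: hm; rewrite /colop eqxx (negbTE hji); lia.
have [L' [e1 e2 e3 e4]] := IH (colop p L j i c t) hm'.
exists L'; split.
- exact: equiv_trans (equiv_colop hp L c t hji) e1.
- exact: e2.
- by move=> r l h1 h2; rewrite e3 // /colop (negbTE h1).
- move=> r h1 h2; apply: e4; rewrite /colop ?eqxx ?(negbTE hji) //.
  by rewrite h2 h1 comp_mono0 subr0.
Qed.

Lemma row_red (L : Mx k n) (s : 'I_n) :
  (forall r l : 'I_n, (r < s)%N -> (r < l)%N -> L r l = 0) ->
  exists L', equiv p L L' /\ forall r l : 'I_n, (r <= s)%N -> (r < l)%N -> L' r l = 0.
Proof.
move=> hL.
suff H : forall m, exists L', [/\ equiv p L L',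
    (forall r l : 'I_n, (r < s)%N -> (r < l)%N -> L' r l = 0) &
    (forall l : 'I_n, (s < l)%N -> (l <= s + m)%N -> L' s l = 0)].
  have [L' [e1 e2 e3]] := H n.
  exists L'; split => // r l; rewrite leq_eqVlt => /orP [/eqP hr|hr] hl; last exact: e2.
  have -> : r = s by apply: val_inj.
  by apply: e3; [rewrite -hr | move: (ltn_ord l); lia].
elim => [|m [L1 [e1 e2 e3]]].
  by exists L; split; [exact: equiv_refl | exact: hL | move=> l; lia].
case: (ltnP (s + m.+1) n) => hlt.
  pose j := Ordinal hlt.
  have hsj : s != j by apply/eqP => /(congr1 val) /=; lia.
  have [L2 [f1 f2 f3 f4]] := two_col L1 s hsj.
  exists L2; split.
  - exact: equiv_trans e1 f1.
  - move=> r l hr hl.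
    have hr1 : L1 r s = 0 by apply: e2 => //.
    have hr2 : L1 r j = 0 by apply: e2 => //=; lia.
    have [g1 g2] := f4 r hr1 hr2.
    case: (eqVneq l s) => [->|hls] //.
    case: (eqVneq l j) => [->|hlj] //.
    by rewrite f3 //; apply: e2.
  - move=> l h1 h2.
    case: (eqVneq l j) => [->|hlj] //.
    have hls : l != s by apply/eqP => /(congr1 val) /=; lia.
    rewrite f3 //; apply: e3 => //.
    have : val l != val j by apply/eqP => /val_inj; apply/eqP.
    rewrite /=; lia.
exists L1; split => // l h1 h2; apply: e3 => //.
by have := ltn_ord l; lia.
Qed.

Lemma triangularize (L : Mx k n) :
  exists L', equiv p L L' /\ forall r l : 'I_n, (r < l)%N -> L' r l = 0.
Proof.
suff H : forall m : nat, exists L', equiv p L L' /\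
    forall r l : 'I_n, (r < m)%N -> (r < l)%N -> L' r l = 0.
  have [L' [e1 e2]] := H n; exists L'; split => // r l; apply: e2; exact: ltn_ord.
elim => [|m [L1 [e1 e2]]].
  by exists L; split; [exact: equiv_refl | move=> r l; lia].
case: (ltnP m n) => hlt.
  have [L2 [f1 f2]] := row_red (s := Ordinal hlt) e2.
  by exists L2; split; [exact: equiv_trans e1 f1 | move=> r l hr; apply: f2].
exists L1; split => // r l hr; apply: e2.
by have := ltn_ord r; lia.
Qed.

End Tri.



Section Diag.
Variables (k : closedFieldType) (p : nat).
Hypothesis hp : p \in [pchar k].
Variable n : nat.

Lemma build (L : Mx k n) (i : 'I_n) (y : k) :
  (forall r l : 'I_n, (r < l)%N -> L r l = 0) ->
  (forall j : 'I_n, (i < j)%N -> L j j != 0) -> ap p (L i i) y = 0 ->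
  exists v : 'rV[k]_n, v 0 i = y /\ act p L v = 0.
Proof.
move=> hL hnz hy.
suff H : forall m : nat, exists v : 'rV[k]_n,
    (forall l : 'I_n, (l <= i)%N -> v 0 l = if l == i then y else 0) /\
    (forall r : 'I_n, (r < m)%N -> act p L v 0 r = 0).
  have [v [h1 h2]] := H n; exists v; split.
    by rewrite h1 // eqxx.
  by apply/rowP => r; rewrite h2 ?mxE.
elim => [|m [v [h1 h2]]].
  by exists (\row_l if l == i then y else 0); split => // l _; rewrite mxE.
case: (ltnP m n) => hm; last first.
  exists v; split => // r hr; apply: h2; have := ltn_ord r; lia.
pose r0 := Ordinal hm.
case: (leqP m i) => hmi.
  exists v; split => // r hr.
  case: (ltnP r m) => hrm; first exact: h2.
  have er : r = r0 by apply: val_inj => /=; lia.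
  rewrite er mxE big1 // => l _.
  case: (ltnP r0 l) => hl; first by rewrite hL // ap0.
  rewrite h1 /=; last by move: hl hmi => /=; lia.
  case: eqP => [el|_]; last exact: ap_x0.
  have -> : r0 = i by apply: val_inj => /=; rewrite el in hl; move: hl hmi => /=; lia.
  by rewrite el.
have [z hz] := ap_surj hp (hnz r0 hmi) (- \sum_(l < n | l != r0) ap p (L r0 l) (v 0 l))%R.
exists (\row_l if l == r0 then z else v 0 l); split.
  move=> l hl; rewrite mxE ifN; first exact: h1.
  by apply/eqP => /(congr1 val) /=; lia.
move=> r hr; rewrite mxE.
case: (ltnP r m) => hrm.
  rewrite -[RHS](h2 r hrm) mxE; apply: eq_bigr => l _; rewrite mxE.
  case: eqP => [->|//]; rewrite !hL ?ap0 //.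
have er : r = r0 by apply: val_inj => /=; lia.
rewrite er (bigD1 r0) //= mxE eqxx hz.
rewrite (eq_bigr (fun l => ap p (L r0 l) (v 0 l))) ?addNr //.
by move=> l hl; rewrite mxE (negbTE hl).
Qed.

Lemma act0 (L : Mx k n) : act p L 0 = 0.
Proof. by apply/rowP => r; rewrite !mxE big1 // => l _; rewrite mxE ap_x0. Qed.

Lemma diag_inj (L : Mx k n) :
  (forall r l : 'I_n, (r < l)%N -> L r l = 0) -> injective (act p L) ->
  forall (i : 'I_n) y, ap p (L i i) y = 0 -> y = 0.
Proof.
move=> hL hinj.
have nz : forall j : 'I_n, L j j != 0.
  suff H : forall m : nat, forall j : 'I_n, (n - m <= j)%N -> L j j != 0.
    by move=> j; apply: (H n); lia.
  elim => [|m IH] j hj; first by have := ltn_ord j; lia.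
  case: (leqP (n - m) j) => h; first exact: IH.
  apply/eqP => hjj.
  have [v [hv1 hv2]] := build hL (fun j' (hj' : (j < j')%N) => IH j' (ltac:(lia))) (y := 1) (ltac:(by rewrite hjj ap0)).
  have : v = 0 by apply: hinj; rewrite hv2 act0.
  by move/(congr1 (fun w : 'rV[k]_n => w 0 j)); rewrite hv1 mxE => /eqP; rewrite oner_eq0.
move=> i y hy.
have [v [hv1 hv2]] := build hL (fun j _ => nz j) hy.
have : v = 0 by apply: hinj; rewrite hv2 act0.
by move/(congr1 (fun w : 'rV[k]_n => w 0 i)); rewrite hv1 mxE.
Qed.

End Diag.



Lemma Wcoords (k : fieldType) n (W : {vspace 'rV[k]_n}) :
  exists r (lam : 'I_n -> 'rV[k]_n -> k),
  [/\ (r + \dim W)%N = n,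
     forall i v, lam i v = \sum_(m < n) v 0 m * lam i (delta_mx 0 m),
     forall v, v \in W <-> (forall i : 'I_n, (i < r)%N -> lam i v = 0)
   & forall v, (forall i, lam i v = 0) -> v = 0].
Proof.
pose X := vbasis W^C; pose Y := vbasis W.
have Hrd : (\dim W^C + \dim W = n)%N.
  rewrite dimv_compl dimvf dim_matrix mul1r subnK //.
  by have := dimvS (subvf W); rewrite dimvf dim_matrix mul1r.
pose e := cat_tuple X Y.
have fe : free e.
  rewrite cat_free !(basis_free (vbasisP _)) /=.
  apply/directv_addP; rewrite !(span_basis (vbasisP _)) capvC; exact: capv_compl.
have se : forall v, v \in <<e>>%VS.
  by move=> v; rewrite span_cat !(span_basis (vbasisP _)) addvC addv_complf memvf.
have eL : forall j : 'I_(\dim W^C), e`_(lshift (\dim W) j) = X`_j.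
  by move=> j; rewrite /= nth_cat size_tuple /= ltn_ord.
have eR : forall j : 'I_(\dim W), e`_(rshift (\dim W^C) j) = Y`_j.
  by move=> j; rewrite /= nth_cat size_tuple /= ltnNge leq_addr /= addKn.
exists (\dim W^C), (fun i v => coord e (cast_ord (esym Hrd) i) v); split => //.
- move=> i v; rewrite {1}(row_sum_delta v) linear_sum; apply: eq_bigr => m _.
  by rewrite linearZ.
- move=> v; split.
  + move=> vW i hi.
    have vY : v = \sum_(j < \dim W) coord Y j v *: Y`_j.
      by apply: coord_span; rewrite (span_basis (vbasisP _)).
    pose kf (i : 'I_(\dim W^C + \dim W)) := match split i with inl _ => 0 | inr j => coord Y j v end.
    have : v = \sum_(i < \dim W^C + \dim W) kf i *: e`_i.
      rewrite big_split_ord /= big1 ?add0r.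
        rewrite {1}vY; apply: eq_bigr => j _; rewrite eR /kf.
        by rewrite (unsplitK (inr _ j)).
      by move=> j _; rewrite /kf (unsplitK (inl _ j)) scale0r.
    move=> ->; rewrite coord_sum_free // /kf.
    case: splitP => // j /= hj; move: hi; rewrite hj; lia.
  + move=> h; rewrite (coord_span (se v)) big_split_ord /= big1 ?add0r.
      apply: memv_suml => j _; apply: memvZ; rewrite eR; apply: vbasis_mem.
      by apply: mem_nth; rewrite size_tuple.
    move=> j _; have := h (cast_ord Hrd (lshift (\dim W) j)) (ltn_ord j).
    by rewrite cast_ordK => ->; rewrite scale0r.
- move=> v h; rewrite (coord_span (se v)) big1 // => i _.
  by have := h (cast_ord Hrd i); rewrite cast_ordK => ->; rewrite scale0r.
Qed.



Lemma polymap_comp (k : closedFieldType) m1 m2 m3 (P : 'I_m2 -> {mpoly k[m1]})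
  (Q : 'I_m3 -> {mpoly k[m2]}) x :
  polymap (fun i => comp_mpoly [tuple P j | j < m2] (Q i)) x = polymap Q (polymap P x).
Proof.
apply/rowP => i; rewrite !mxE comp_mpoly_meval.
by apply: meval_eq => j; rewrite tnth_mktuple mxE.
Qed.

Lemma polymap_f (k : closedFieldType) p n (N : 'I_n -> nat) (a : 'I_n -> 'I_n -> nat -> k) x :
  polymap (addpoly p N a) x = act p (fun j i => \poly_(l < (N j).+1) a j i l) x.
Proof.
apply/rowP => j; rewrite !mxE /addpoly raddf_sum; apply: eq_bigr => i _.
rewrite raddf_sum (@ap_sz _ _ _ _ (N j).+1) ?size_poly //; apply: eq_bigr => l _.
by rewrite /= mevalZ rmorphXn /= mevalXU coef_poly ltn_ord.
Qed.

Unset Implicit Arguments.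
Set Strict Implicit.

Theorem lemma7p1 (k : closedFieldType) (p : nat) (n : nat)
    (N : 'I_n -> nat) (a : 'I_n -> 'I_n -> nat -> k) :
  p \in [pchar k] ->
  finite_polymap (addpoly p N a) ->
  bijective (polymap (addpoly p N a)) ->
  forall W : {vspace 'rV[k]_n},
  exists (phi : 'I_n -> {mpoly k[\dim W]}) (psi : 'I_(\dim W) -> {mpoly k[n]}),
    [/\ forall t : 'rV[k]_(\dim W), polymap (addpoly p N a) (polymap phi t) \in W,
        forall t : 'rV[k]_(\dim W), polymap psi (polymap phi t) = t
      & forall x : 'rV[k]_n, polymap (addpoly p N a) x \in W ->
          polymap phi (polymap psi x) = x].
Proof.
move=> hp _ [g fg gf] W.
set f := polymap (addpoly p N a).
have finj : injective f := can_inj fg.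
have [r [lam [Hrd hlin hW hinj]]] := Wcoords W.
pose Fm := fun j i : 'I_n => \poly_(l < (N j).+1) a j i l.
pose G0 : Mx k n := fun r0 l => \sum_(m < n) lam r0 (delta_mx 0 m) *: Fm m l.
have hG : forall x i, act p G0 x 0 i = lam i (f x).
  move=> x i; rewrite mxE /f polymap_f hlin.
  under eq_bigr => l _ do rewrite ap_sum (eq_bigr _ (fun m _ => apZ _ _ _ _)).
  rewrite exchange_big /=; apply: eq_bigr => m _; rewrite mxE mulr_suml.
  by apply: eq_bigr => l _; rewrite mulrC.
have [L [[E [Ei [pE pEi EK EiK hE]]] hL]] := triangularize hp G0.
have actinj : injective (act p L).
  move=> y y' h; apply: (can_inj EiK); apply: finj; apply/eqP; rewrite -subr_eq0; apply/eqP.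
  apply: hinj => i; rewrite hlin.
  have := congr1 (fun w : 'rV[k]_n => w 0 i) h; rewrite -(EiK y) -(EiK y') -!hE /= !hG.
  rewrite !(hlin i (f _)) => e.
  rewrite !EK; under eq_bigr => m _ do rewrite [((_ - _)%R : 'rV[k]_n) 0 m]mxE [((- _)%R : 'rV[k]_n) 0 m]mxE mulrBl.
  by rewrite sumrB e subrr.
have hdiag := diag_inj hp hL actinj.
have [PE hPE] := pE; have [PEi hPEi] := pEi.
pose hi (m : 'I_(\dim W)) : 'I_n := cast_ord Hrd (rshift r m).
have hi_inj : injective hi.
  by move=> m1 m2 /(congr1 val) /= /eqP; rewrite eqn_add2l => /eqP /val_inj.
pose Pinj : 'I_n -> {mpoly k[\dim W]} := fun j => \sum_(m < \dim W | hi m == j) 'X_m.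
have Pinj_lo : forall t (j : 'I_n), (j < r)%N -> polymap Pinj t 0 j = 0.
  move=> t j hj; rewrite mxE raddf_sum big1 // => m /eqP hm.
  by move: hj; rewrite -hm /=; lia.
have Pinj_hi : forall t m, polymap Pinj t 0 (hi m) = t 0 m.
  move=> t m; rewrite mxE raddf_sum (big_pred1 m) /= ?mevalXU //.
  by move=> m'; rewrite /= (inj_eq hi_inj).
pose phi := fun j => comp_mpoly [tuple Pinj l | l < n] (PEi j).
pose psi := fun m => PE (hi m).
have hphi : forall t, polymap phi t = Ei (polymap Pinj t).
  by move=> t; rewrite polymap_comp hPEi.
have hpsi : forall x m, polymap psi x 0 m = E x 0 (hi m).
  by move=> x m; rewrite -hPE !mxE.
exists phi, psi; split.
- move=> t; apply/hW => i hi_r; rewrite -hG hE hphi EiK mxE big1 // => l _.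
  case: (ltnP i l) => hl; first by rewrite hL // ap0.
  by rewrite Pinj_lo ?ap_x0 //; lia.
- move=> t; apply/rowP => m; rewrite hpsi hphi EiK Pinj_hi //.
- move=> x hx.
  have hy : forall j : 'I_n, (j < r)%N -> E x 0 j = 0.
    suff H : forall m : nat, forall j : 'I_n, (j < m)%N -> (j < r)%N -> E x 0 j = 0.
      by move=> j; apply: (H n).
    elim => [|m IH] j hjm hjr; first by [].
    case: (ltnP j m) => hj; first exact: IH.
    apply: (hdiag j); have := (proj1 (hW (f x)) hx) j hjr.
    rewrite -hG hE mxE (bigD1 j) //= big1 ?addr0 // => l hl.
    case: (ltnP j l) => hjl; first by rewrite hL // ap0.
    rewrite IH ?ap_x0 //; last by lia.
    have h2 : nat_of_ord l != nat_of_ord j by [].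
    by move: h2 hjl hjm hj; lia.
  rewrite hphi; have -> : polymap Pinj (polymap psi x) = E x; last by rewrite EK.
  apply/rowP => j.
  have := cast_ordKV Hrd j; case: (splitP (cast_ord (esym Hrd) j)) => [j0 hj0|m hm] ej.
    by rewrite Pinj_lo ?hy //; move: hj0 (ltn_ord j0) => /= ->.
  have -> : j = hi m by apply: val_inj; move: hm => /= ->.
  by rewrite Pinj_hi hpsi.
Qed.
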